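(* Let $R$ be a Bézout domain and let $A,B,C\in R^{n\times n}$ satisfy $ABA=ACA$. If $AB$ and $CA$ are group invertible, then $AB$ is similar to $CA$.
   Context: A Bézout domain is an integral domain in which every finitely generated ideal is principal. $R^{n\times n}$ is the ring of $n\times n$ matrices over $R$. A matrix $M\in R^{n\times n}$ is group invertible if there exists $X\in R^{n\times n}$ with $MX=XM$, $XMX=X$, $MXM=M$; such $X$ is unique and denoted $M^{\#}$. Two matrices $M,N\in R^{n\times n}$ are similar if $M=S^{-1}NS$ for some invertible $S\in R^{n\times n}$. *)

(* Defs.v *)
From HB Require Import structures.
From mathcomp Require Import all_boot all_order all_algebra.
Set Implicit Arguments. Unset Strict Implicit. Unset Printing Implicit Defensive.
Import GRing.Theory.
Local Open Scope ring_scope.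

Definition in_ideal_gen (R : comNzRingType) (s : seq R) (x : R) : Prop :=
  exists c : seq R, size c = size s /\ x = \sum_(i < size s) c`_i * s`_i.

Definition bezout_domain (R : idomainType) : Prop :=
  forall s : seq R, exists d : R,
    forall x : R, in_ideal_gen s x <-> exists r : R, x = r * d.

Definition group_invertible (R : comNzRingType) (n : nat) (M : 'M[R]_n) : Prop :=
  exists X : 'M[R]_n, [/\ M *m X = X *m M, X *m M *m X = X & M *m X *m M = M].

Definition similar_mx (R : comUnitRingType) (n : nat) (M N : 'M[R]_n) : Prop :=
  exists S : 'M[R]_n, S \in unitmx /\ M = invmx S *m N *m S.

(* Main.v *)
Require Import Defs.
From HB Require Import structures.
From mathcomp Require Import all_boot all_order all_algebra.
Local Open Scope ring_scope.
From mathcomp Require Import zify.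
Set Implicit Arguments. Unset Strict Implicit. Unset Printing Implicit Defensive.
Import GRing.Theory.

Section S.
Variable R : idomainType.

Lemma rank_le (a b : nat) (X : 'M[R]_(a,b)) (Y : 'M[R]_(b,a)) :
  X *m Y = 1%:M -> (a <= b)%N.
Proof.
move=> h.
have h' := congr1 (map_mx (@tofrac R)) h.
rewrite map_mxM map_mx1 in h'.
have := mxrankM_maxl (map_mx (@tofrac R) X) (map_mx (@tofrac R) Y).
rewrite h' mxrank1 => /leq_trans; apply; exact: rank_leq_col.
Qed.

Lemma in_ideal_nth (s : seq R) k : (k < size s)%N -> in_ideal_gen s s`_k.
Proof.
move=> ks.
exists [seq (j == k)%:R | j <- iota 0 (size s)]; split.
  by rewrite size_map size_iota.
rewrite (bigD1 (Ordinal ks)) //= big1 ?addr0.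
  by rewrite (nth_map 0%N) ?size_iota // nth_iota // eqxx mul1r.
move=> i /eqP hi; rewrite (nth_map 0%N) ?size_iota // nth_iota //=.
case: eqP; last by rewrite mul0r.
by move=> e; exfalso; apply: hi; apply: val_inj.
Qed.

Lemma unimod (hB : bezout_domain R) n (x : 'cV[R]_n) : x != 0 ->
  exists d (y : 'cV[R]_n) (w : 'rV[R]_n), [/\ d != 0, x = d *: y & w *m y = 1%:M].
Proof.
move=> x0.
pose s := [seq x i 0 | i <- enum 'I_n].
have sz : size s = n by rewrite size_map size_enum_ord.
have sE : forall i : 'I_n, s`_i = x i 0.
  by move=> i; rewrite (nth_map i) ?size_enum_ord // nth_ord_enum.
have [d hd] := hB s.
have hx : forall i : 'I_n, exists r, x i 0 = r * d.
  by move=> i; apply/hd; rewrite -sE; apply: in_ideal_nth; rewrite sz.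
have [c [cs dE]] : in_ideal_gen s d by apply/hd; exists 1; rewrite mul1r.
have [f hf] := fin_all_exists hx.
pose y := \col_i (f i).
have xy : x = d *: y.
  apply/matrixP => i j; rewrite (ord1 j) !mxE mulrC.
  exact: hf.
have d0 : d != 0.
  apply: contraNneq x0 => d0; by rewrite xy d0 scale0r.
exists d, y, (\row_(i < n) c`_i); split => //.
have : d *: ((\row_(i < n) c`_i) *m y) = d *: 1%:M.
  rewrite scalemxAr -xy; apply/matrixP => i j; rewrite (ord1 i) (ord1 j) !mxE.
  rewrite mulr1 dE.
  rewrite -(big_mkord xpredT (fun k => c`_k * s`_k)) sz big_mkord.
  by apply: eq_bigr => k _; rewrite sE mxE.
move/eqP; rewrite -subr_eq0 -scalerBr scalemx_eq0 (negbTE d0) /= subr_eq0.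
by move/eqP.
Qed.


Lemma idem_vec (hB : bezout_domain R) n (E : 'M[R]_n) : E *m E = E -> E != 0 ->
  exists (y : 'cV[R]_n) (w : 'rV[R]_n), [/\ E *m y = y, w *m E = w & w *m y = 1%:M].
Proof.
move=> EE E0.
have [j hj] : exists j, E *m delta_mx j (0 : 'I_1) != 0.
  apply/existsP; rewrite -negb_forall; apply: contra E0 => /forallP h.
  apply/eqP/matrixP => i j; have /eqP/matrixP/(_ i 0) := h j.
  by rewrite -colE !mxE.
have [d [y [w0 [d0 xy wy]]]] := unimod hB hj.
have Ey : E *m y = y.
  apply/eqP; rewrite -subr_eq0; apply/eqP.
  have : d *: (E *m y - y) = 0.
    by rewrite scalerBr scalemxAr -xy mulmxA EE subrr.
  by move/eqP; rewrite scalemx_eq0 (negbTE d0) /= => /eqP.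
exists y, (w0 *m E); split.
- by [].
- by rewrite -mulmxA EE.
- by rewrite -mulmxA Ey.
Qed.

Lemma extend (hB : bezout_domain R) n r (L : 'M[R]_(n,r)) T E :
  E *m E = E -> T *m L = 1%:M -> T *m E = 0 -> E *m L = 0 -> E != 0 ->
  exists (L2 : 'M[R]_(n, r + 1)) (T2 : 'M[R]_(r + 1, n)) E2,
  [/\ L2 *m T2 + E2 = L *m T + E, E2 *m E2 = E2, T2 *m L2 = 1%:M,
      T2 *m E2 = 0 & E2 *m L2 = 0].
Proof.
move=> EE TL TE EL E0.
have [y [w [Ey wE wy]]] := idem_vec hB EE E0.
have Ty : T *m y = 0 by rewrite -Ey mulmxA TE mul0mx.
have wL : w *m L = 0 by rewrite -wE -mulmxA EL mulmx0.
exists (row_mx L y), (col_mx T w), (E - y *m w); split.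
- by rewrite mul_row_col [E - _]addrC addrA addrK.
- rewrite mulmxBl !mulmxBr EE !mulmxA Ey -(mulmxA y w E) wE -(mulmxA y w y) wy mulmx1.
  by rewrite subrr subr0.
- by rewrite mul_col_row TL Ty wL wy -scalar_mx_block.
- by rewrite mul_col_mx !mulmxBr !mulmxA TE Ty mul0mx subrr wE wy mul1mx subrr col_mx0.
- by rewrite mul_mx_row !mulmxBl -!mulmxA EL wL Ey wy mulmx0 mulmx1 !subrr row_mx0.
Qed.

Lemma factor_aux (hB : bezout_domain R) n k : forall r (L : 'M[R]_(n,r)) T E,
  (n - r <= k)%N -> E *m E = E -> T *m L = 1%:M -> T *m E = 0 -> E *m L = 0 ->
  exists r' (L' : 'M[R]_(n,r')) (T' : 'M[R]_(r',n)),
    L' *m T' = L *m T + E /\ T' *m L' = 1%:M.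
Proof.
elim: k => [|k IH] r L T E hk EE TL TE EL;
  (have [->|E0] := eqVneq E 0; first by exists r, L, T; rewrite addr0);
  have [L2 [T2 [E2 [h1 h2 h3 h4 h5]]]] := extend hB EE TL TE EL E0;
  have rn := rank_le h3.
  by move: hk rn; lia.
have [|r' [L' [T' [e1 e2]]]] := IH _ L2 T2 E2 _ h2 h3 h4 h5.
  by move: hk rn; lia.
by exists r', L', T'; rewrite e1 h1.
Qed.

Lemma factor (hB : bezout_domain R) n (E : 'M[R]_n) : E *m E = E ->
  exists r (L : 'M[R]_(n,r)) (T : 'M[R]_(r,n)), L *m T = E /\ T *m L = 1%:M.
Proof.
move=> EE.
have [] := factor_aux hB (leq_subr 0 n) EE (T := 0) (L := 0).
- by apply/matrixP => [[]].
- by rewrite mul0mx.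
- by rewrite mulmx0.
move=> r [L [T [h1 h2]]].
by exists r, L, T; rewrite h1 mulmx0 add0r.
Qed.


Lemma assemble n r r2 s s2 (P Q : 'M[R]_n) (L1 : 'M_(n,r)) T1 (L2 : 'M_(n,r2)) T2
  (L3 : 'M_(n,s)) T3 (L4 : 'M_(n,s2)) T4 (M : 'M_(s,r)) (Ml : 'M_(r,s)) P1 Q1 :
  L1 *m T1 + L2 *m T2 = 1%:M -> T3 *m L4 = 0 -> T4 *m L3 = 0 -> T4 *m L4 = 1%:M ->
  T3 *m L3 = 1%:M -> Ml *m M = 1%:M -> (r2 <= s2)%N ->
  T1 *m P = P1 *m T1 -> T2 *m P = 0 -> Q *m L3 = L3 *m Q1 -> Q *m L4 = 0 ->
  M *m P1 = Q1 *m M -> similar_mx P Q.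
Proof.
move=> h12 h34 h43 h44 h33 hM rs hT1P hT2P hQL3 hQL4 hMP.
pose N : 'M[R]_(s2, r2) := pid_mx r2.
pose N' : 'M[R]_(r2, s2) := pid_mx r2.
have hN : N' *m N = 1%:M by rewrite mul_pid_mx minnn (minn_idPr rs) pid_mx_1.
pose S := L3 *m M *m T1 + L4 *m N *m T2.
pose S' := L1 *m Ml *m T3 + L2 *m N' *m T4.
have SS : S' *m S = 1%:M.
  rewrite /S /S' !mulmxDl !mulmxDr !mulmxA.
  rewrite -(mulmxA _ T3 L3) h33 mulmx1 -(mulmxA _ Ml M) hM mulmx1.
  rewrite -(mulmxA _ T3 L4) h34 mulmx0 !mul0mx addr0.
  rewrite -(mulmxA _ T4 L3) h43 mulmx0 !mul0mx add0r.
  rewrite -(mulmxA _ T4 L4) h44 mulmx1 -(mulmxA _ N' N) hN mulmx1.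
  exact: h12.
have [_ Su] := mulmx1_unit SS.
have SP : S *m P = Q *m S.
  rewrite /S mulmxDl mulmxDr -!mulmxA hT1P hT2P !mulmx0 addr0.
  rewrite !mulmxA hQL4 !mul0mx addr0 hQL3 -!mulmxA; congr (_ *m _).
  by rewrite !mulmxA hMP.
exists S; split => //.
by rewrite -mulmxA -SP mulmxA mulVmx // mul1mx.
Qed.


Lemma mA2 m n p q (X : 'M[R]_(n,p)) (Y : 'M_(p,q)) (W : 'M_(n,q)) :
  X *m Y = W -> forall Z : 'M_(m,n), Z *m X *m Y = Z *m W.
Proof. by move=> h Z; rewrite -mulmxA h. Qed.
Lemma mA3 m n p q o (X : 'M[R]_(n,p)) (Y : 'M_(p,q)) (V : 'M_(q,o)) (W : 'M_(n,o)) :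
  X *m Y *m V = W -> forall Z : 'M_(m,n), Z *m X *m Y *m V = Z *m W.
Proof. by move=> h Z; rewrite -h !mulmxA. Qed.

Lemma idem_fac n r (L : 'M[R]_(n,r)) T E : L *m T = E -> T *m L = 1%:M ->
  T *m E = T /\ E *m L = L.
Proof. by move=> h1 h2; rewrite -h1 mulmxA h2 mul1mx -mulmxA h2 mulmx1. Qed.

Lemma orth n r r' (L : 'M[R]_(n,r)) T (L' : 'M[R]_(n,r')) T' E :
  E *m E = E -> L *m T = E -> T *m L = 1%:M -> L' *m T' = 1%:M - E -> T' *m L' = 1%:M ->
  T *m L' = 0 /\ T' *m L = 0.
Proof.
move=> EE h1 h2 h3 h4.
have [a1 a2] := idem_fac h1 h2; have [a3 a4] := idem_fac h3 h4.
split.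
  by rewrite -a1 -a4 mulmxA -(mulmxA T) mulmxBr mulmx1 EE subrr mulmx0 mul0mx.
by rewrite -a3 -a2 mulmxA -(mulmxA T') mulmxBl mul1mx EE subrr mulmx0 mul0mx.
Qed.


Lemma idemC n (E : 'M[R]_n) : E *m E = E -> (1%:M - E) *m (1%:M - E) = 1%:M - E.
Proof. by move=> EE; rewrite mulmxBl !mulmxBr !mul1mx mulmx1 EE subrr subr0. Qed.

Lemma main_abs (hB : bezout_domain R) n (P Q X Y A K : 'M[R]_n) :
  P *m X = X *m P -> X *m P *m X = X -> P *m X *m P = P ->
  Q *m Y = Y *m Q -> Y *m Q *m Y = Y -> Q *m Y *m Q = Q ->
  A *m K = P *m P -> K *m A = Q *m Q -> Q *m K = K *m P ->
  Q *m Y *m K = K -> K *m P *m X = K -> similar_mx P Q.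
Proof.
move=> hP1 hP2 hP3 hQ1 hQ2 hQ3 k1 k2 k3 k4 k5.
have rPXP := mA3 hP3; have rQYQ := mA3 hQ3.
have hPPX : P *m P *m X = P by rewrite -mulmxA hP1 mulmxA hP3.
have hQQY : Q *m Q *m Y = Q by rewrite -mulmxA hQ1 mulmxA hQ3.
have rPPX := mA3 hPPX; have rQQY := mA3 hQQY.
have rXP := mA2 (esym hP1); have rYQ := mA2 (esym hQ1).
have EE : P *m X *m (P *m X) = P *m X by rewrite mulmxA hP3.
have FF : Q *m Y *m (Q *m Y) = Q *m Y by rewrite mulmxA hQ3.
have [r [L1 [T1 [e1 f1]]]] := factor hB EE.
have [r2 [L2 [T2 [e2 f2]]]] := factor hB (idemC EE).
have [s [L3 [T3 [e3 f3]]]] := factor hB FF.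
have [s2 [L4 [T4 [e4 f4]]]] := factor hB (idemC FF).
have [g1 g1'] := idem_fac e1 f1.
have [g3 g3'] := idem_fac e3 f3.
have [o12 o21] := orth EE e1 f1 e2 f2.
have [o34 o43] := orth FF e3 f3 e4 f4.
have rg1 := mA3 g1'; have rg3 := mA3 g3'.
have re1 := mA2 e1; have re3 := mA2 e3.
pose P1 := T1 *m P *m L1. pose Q1 := T3 *m Q *m L3.
pose X1 := T1 *m X *m L1. pose Y1 := T3 *m Y *m L3.
pose M := T3 *m K *m L1. pose M' := T1 *m A *m L3.
have XP1 : X1 *m P1 = 1%:M.
  by rewrite /X1 /P1 !mulmxA re1 !mulmxA rPXP rXP !mulmxA rg1 f1.
have YQ1 : Y1 *m Q1 = 1%:M.
  by rewrite /Y1 /Q1 !mulmxA re3 !mulmxA rQYQ rYQ !mulmxA rg3 f3.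
have QY1 : Q1 *m Y1 = 1%:M by apply: mulmx1C.
have MM' : M' *m M = P1 *m P1.
  by rewrite /M' /M /P1 !mulmxA re3 !mulmxA (mA3 k4) (mA2 k1) re1 !mulmxA rPXP.
have MM'' : M *m M' = Q1 *m Q1.
  by rewrite /M' /M /Q1 !mulmxA re1 !mulmxA (mA3 k5) (mA2 k2) re3 !mulmxA rQYQ.
pose Ml := X1 *m X1 *m M'.
have hMl : Ml *m M = 1%:M.
  by rewrite /Ml -mulmxA MM' mulmxA -(mulmxA X1 X1) XP1 mulmx1 XP1.
pose Mr := M' *m Y1 *m Y1.
have hMr : M *m Mr = 1%:M.
  by rewrite /Mr (mulmxA M) (mulmxA M) MM'' -(mulmxA Q1 Q1) QY1 mulmx1 QY1.
have sr := rank_le hMr.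
have rn : (r + r2 <= n)%N.
  apply: (@rank_le _ _ (col_mx T1 T2) (row_mx L1 L2)).
  by rewrite mul_col_row f1 f2 o12 o21 -scalar_mx_block.
have ns : (n <= s + s2)%N.
  apply: (@rank_le _ _ (row_mx L3 L4) (col_mx T3 T4)).
  by rewrite mul_row_col e3 e4 addrC subrK.
apply: (@assemble n r r2 s s2 P Q L1 T1 L2 T2 L3 T3 L4 T4 M Ml P1 Q1).
- by rewrite e1 e2 addrC subrK.
- exact: o34.
- exact: o43.
- exact: f4.
- exact: f3.
- exact: hMl.
- by move: sr rn ns; lia.
- by rewrite /P1 -mulmxA e1 !mulmxA rPPX.
- have [a _] := idem_fac e2 f2.
  by rewrite -a -mulmxA mulmxBl mul1mx hP3 subrr mulmx0.
- by rewrite /Q1 !mulmxA e3 ?mulmxA hQ3.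
- have [_ a] := idem_fac e4 f4.
  by rewrite -a mulmxA mulmxBr mulmx1 mulmxA hQQY subrr mul0mx.
- by rewrite /M /P1 /Q1 !mulmxA re1 !mulmxA rPXP re3 !mulmxA (mA3 k4) (mA2 k3) !mulmxA.
Qed.

End S.

Theorem theorem2p1 (R : idomainType) (n : nat) (A B C : 'M[R]_n) :
  bezout_domain R ->
  A *m B *m A = A *m C *m A ->
  group_invertible (A *m B) -> group_invertible (C *m A) ->
  similar_mx (A *m B) (C *m A).
Proof.
move=> hB hABA [X [hP1 hP2 hP3]] [Y [hQ1 hQ2 hQ3]].
apply: (@main_abs R hB n (A *m B) (C *m A) X Y A (C *m (A *m B))) => //.
- by rewrite !mulmxA -hABA.
- by rewrite !mulmxA (mA3 hABA) !mulmxA.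
- by rewrite !mulmxA (mA3 (esym hABA)) !mulmxA.
- by rewrite (mulmxA C A B) mulmxA hQ3.
- have hPPX : A *m B *m (A *m B) *m X = A *m B.
    by rewrite -mulmxA hP1 mulmxA hP3.
  have := congr1 (mulmx C) hPPX; rewrite !mulmxA => ->.
  by [].
Qed.
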